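(* Let $D$ be an antimatter domain. Then $D$ is a GL-domain if and only if the polynomial ring $D[X]$ is a completely atomic domain.
   Context: An atom (irreducible element) of an integral domain is a nonzero nonunit $a$ such that $a=bc$ implies $b$ or $c$ is a unit. A domain is antimatter if it has no atoms. A nonzero nonunit is atomic if it is a finite product of atoms; a domain is completely atomic if every nonunit divisor of an atomic element is atomic. A nonzero polynomial $f\in D[X]$ is primitive if the only common divisors in $D$ of its coefficients are units. $D$ is a GL-domain if the product of any two primitive polynomials in $D[X]$ is primitive. *)

(* Defs.v *)
From HB Require Import structures.
From mathcomp Require Import all_boot all_order all_algebra.
Set Implicit Arguments. Unset Strict Implicit. Unset Printing Implicit Defensive.
Import GRing.Theory.
Local Open Scope ring_scope.

Definition divides (R : comPzRingType) (b a : R) : Prop := exists c : R, a = b * c.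

Definition atom (R : idomainType) (a : R) : Prop :=
  [/\ a != 0, a \isn't a GRing.unit &
      forall b c : R, a = b * c -> b \is a GRing.unit \/ c \is a GRing.unit].

Definition antimatter (R : idomainType) : Prop := forall a : R, ~ atom a.

Definition atomic_elt (R : idomainType) (a : R) : Prop :=
  [/\ a != 0, a \isn't a GRing.unit &
      exists s : seq R, (forall x, x \in s -> atom x) /\ a = \prod_(x <- s) x].

Definition completely_atomic (R : idomainType) : Prop :=
  forall a b : R, atomic_elt a -> divides b a -> b \isn't a GRing.unit -> atomic_elt b.

Definition primitive_poly (R : idomainType) (f : {poly R}) : Prop :=
  f != 0 /\ forall d : R, (forall i : nat, divides d f`_i) -> d \is a GRing.unit.

Definition GL_domain (R : idomainType) : Prop :=
  forall f g : {poly R}, primitive_poly f -> primitive_poly g -> primitive_poly (f * g).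

(* Main.v *)
Require Import Defs.
From mathcomp Require Import all_boot all_order all_algebra.
From Stdlib Require Import Classical.
From mathcomp Require Import zify.
Import GRing.Theory.
Local Open Scope ring_scope.

Section Aux.
Variable R : idomainType.
Implicit Types (p q f g : {poly R}) (d : R).

Lemma polyC_unit (c : R) : (c%:P \is a GRing.unit) = (c \is a GRing.unit).
Proof.
rewrite poly_unitE coefC /= size_polyC.
case: (boolP (c \is a GRing.unit)) => Hc; last by rewrite andbF.
by rewrite andbT; apply/eqP; case: eqP => // c0; move: Hc; rewrite c0 unitr0.
Qed.

Lemma coefs_div d p : (forall i, divides d p`_i) -> exists q, p = d%:P * q.
Proof.
move=> H.
have H' : forall i, exists c, p`_i == d * c.
  by move=> i; case: (H i) => c ->; exists c.
exists (\poly_(i < size p) xchoose (H' i)).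
apply/polyP => i; rewrite coefCM coef_poly.
case: ltnP => Hi; first by apply/eqP; exact: (xchooseP (H' i)).
by rewrite mulr0; apply/(leq_sizeP _ _ (leqnn _)).
Qed.

Lemma div_coefs d p q : p = d%:P * q -> forall i, divides d p`_i.
Proof. by move=> -> i; exists q`_i; rewrite coefCM. Qed.

Lemma prim_div p a b : primitive_poly p -> p = a * b -> primitive_poly a.
Proof.
move=> [p0 Hp] E; split.
  by apply: contraNneq p0 => a0; rewrite E a0 mul0r.
move=> d /coefs_div [a' Ea]; apply: Hp; apply: (@div_coefs d _ (a' * b)).
by rewrite E Ea mulrA.
Qed.

Lemma prim_size p : primitive_poly p -> p \isn't a GRing.unit -> (1 < size p)%N.
Proof.
move=> [p0 Hp] pu; rewrite ltnNge; apply/negP => s1.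
have Ep := size1_polyC s1.
have : p`_0 \is a GRing.unit.
  apply: Hp => i; apply: (@div_coefs _ _ 1); by rewrite mulr1.
by rewrite -polyC_unit -Ep (negbTE pu).
Qed.

Lemma prim_atomic p : primitive_poly p -> p \isn't a GRing.unit -> atomic_elt p.
Proof.
move: {2}(size p) (leqnn (size p)) => n; elim: n p => [|n IH] p Hs Pp pu.
  by move: (@prim_size p Pp pu); rewrite ltnNge (leq_trans Hs).
have p0 : p != 0 by case: Pp.
split => //.
case: (classic (forall b c : {poly R}, p = b * c -> b \is a GRing.unit \/ c \is a GRing.unit)) => Hat.
  by exists [:: p]; split; [move=> x; rewrite inE => /eqP ->; split | rewrite big_seq1].
have [b Hb] := not_all_ex_not _ _ Hat.
have [c Hc] := not_all_ex_not _ _ Hb.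
have [E Hn] := imply_to_and _ _ Hc.
have bu : b \isn't a GRing.unit by apply/negP => bu; apply: Hn; left.
have cu : c \isn't a GRing.unit by apply/negP => cu; apply: Hn; right.
have Pb := @prim_div p b c Pp E.
have Pc : primitive_poly c by apply: (@prim_div p c b Pp); rewrite E mulrC.
have sb := @prim_size b Pb bu; have sc := @prim_size c Pc cu.
have b0 : b != 0 by case: Pb.
have c0 : c != 0 by case: Pc.
have Es : size p = (size b + size c).-1 by rewrite E size_mul.
have [_ _ [sb' [Hsb Eb]]] := IH b ltac:(lia) Pb bu.
have [_ _ [sc' [Hsc Ec]]] := IH c ltac:(lia) Pc cu.
exists (sb' ++ sc'); split.
  by move=> x; rewrite mem_cat => /orP [] ?; [apply: Hsb | apply: Hsc].
by rewrite big_cat /= -Eb -Ec.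
Qed.

Lemma constant_atom (c : R) : atom c%:P -> atom c.
Proof.
move=> [c0 cu H]; split.
- by rewrite -polyC_eq0.
- by rewrite -polyC_unit.
- move=> a b E; have := H a%:P b%:P; rewrite -polyCM -E => /(_ erefl).
  by rewrite !polyC_unit.
Qed.

Lemma atom_prim : antimatter R -> forall p, atom p -> primitive_poly p.
Proof.
move=> AM p Ap; have Ap' := Ap; case: Ap' => [p0 pu H]; split => // d.
move=> /coefs_div [q E]; case: (H _ _ E); first by rewrite polyC_unit.
move=> qu; exfalso.
have sq : size q = 1%N by move: qu; rewrite poly_unitE => /andP [/eqP].
have Eq := size1_polyC (eq_leq sq).
apply: (AM (d * q`_0)); apply: constant_atom.
by rewrite polyCM -Eq -E.
Qed.

Lemma prim1 : primitive_poly (1 : {poly R}).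
Proof.
split; first exact: oner_neq0.
move=> d /(_ 0%N) [c]; rewrite coefC /= => E.
have : d * c \is a GRing.unit by rewrite -E unitr1.
by rewrite unitrM => /andP [].
Qed.

End Aux.

Theorem proposition4p1 (R : idomainType) :
  antimatter R -> (GL_domain R <-> completely_atomic {poly R}).
Proof.
move=> AM; split.
- move=> GL f g [f0 fu [s [Hs Ef]]] [h Eh] gu.
  have Pf : primitive_poly f.
    rewrite Ef; elim: s Hs {Ef} => [|x s IH] Hs; first by rewrite big_nil; exact: prim1.
    rewrite big_cons; apply: GL; first by apply: atom_prim => //; apply: Hs; rewrite inE eqxx.
    by apply: IH => y ys; apply: Hs; rewrite inE ys orbT.
  exact: (@prim_atomic R g (@prim_div R f g h Pf Eh) gu).
- move=> CA f g Pf Pg.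
  have fg0 : f * g != 0 by rewrite mulf_neq0 //; [case: Pf | case: Pg].
  split => // d /coefs_div [h Eh].
  case: (boolP (f \is a GRing.unit)) => fu.
    case: Pg => _; apply; apply: (@div_coefs R _ _ (f^-1 * h)).
    by rewrite mulrCA -Eh mulKr.
  case: (boolP (g \is a GRing.unit)) => gu.
    case: Pf => _; apply; apply: (@div_coefs R _ _ (g^-1 * h)).
    by rewrite mulrCA -Eh [g^-1 * _]mulrC mulrK.
  case: (boolP (d \is a GRing.unit)) => // du; exfalso.
  have [_ _ [sf [Hsf Ef]]] := @prim_atomic R f Pf fu.
  have [_ _ [sg [Hsg Eg]]] := @prim_atomic R g Pg gu.
  have Afg : atomic_elt (f * g).
    split => //; first by rewrite unitrM negb_and fu.
    exists (sf ++ sg); split; last by rewrite big_cat -Ef -Eg.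
    by move=> x; rewrite mem_cat => /orP [] ?; [apply: Hsf | apply: Hsg].
  have [d0 dPu [s [Hs Ed]]] := CA _ _ Afg (ex_intro _ h Eh) ltac:(by rewrite polyC_unit).
  case: s Hs Ed => [|x s] Hs Ed.
    by move: dPu; rewrite Ed big_nil unitr1.
  move: Ed; rewrite big_cons => Ed.
  have x0 : x != 0 by case: (Hs x (mem_head _ _)).
  move: Ed; set P := \prod_(j <- s) j => Ed.
  have r0 : P != 0 by apply: contraNneq d0 => r0; rewrite Ed r0 mulr0.
  have sx : (size x <= 1)%N.
    have := size_mul x0 r0; rewrite -Ed size_polyC.
    have : (0 < size P)%N by rewrite size_poly_gt0.
    lia.
  apply: (AM x`_0); apply: constant_atom; rewrite -(size1_polyC sx).
  exact: Hs (mem_head _ _).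
Qed.
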